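(* Assume each $f_i$ is differentiable and $L$-smooth. Then for every $x\in\mathrm{St}(d,r)^\epsilon$, $\|\nabla\mathcal{L}(x)\|_F\le C\|\Lambda(x)\|_F$, where $C=\frac{3L'}{\lambda(1-\epsilon)}+2$.
   Context: Notation: $\mathrm{sym}(A)=\frac12(A+A^\top)$, $\mathrm{skew}(A)=\frac12(A-A^\top)$; $\langle A,B\rangle=\mathrm{Tr}(AB^\top)$; $\|\cdot\|_F$ Frobenius norm. $\mathrm{St}(d,r)=\{x\in\mathbb{R}^{d\times r}:x^\top x=I_r\}$; for $\epsilon\in(0,3/4)$, $\mathrm{St}(d,r)^\epsilon=\{x:\|x^\top x-I_r\|_F\le\epsilon\}$. Functions: $f_1,\dots,f_n:\mathbb{R}^{d\times r}\to\mathbb{R}$, $L$-smooth meaning $f_i(y)\le f_i(x)+\langle\nabla f_i(x),y-x\rangle+\frac L2\|y-x\|_F^2$; $f=\frac1n\sum_if_i$ is $C^2$. $\mathrm{grad}\, g(x)=\mathrm{skew}(\nabla g(x)x^\top)x$. For $\lambda>0$, $\Lambda(x)=\mathrm{grad} f(x)+\lambda x(x^\top x-I_r)$, $\Lambda_i$ analogously with $f_i$. $\hat L=\max(L,\max_{x\in\mathrm{St}(d,r)^\epsilon}\|\nabla f(x)\|_F)$, $s=\sup_{x\in\mathrm{St}(d,r)^\epsilon}\|\mathrm{sym}(x^\top\nabla f(x))\|_F$, $\gamma\ge\frac{2}{3-4\epsilon}\big(L(1-\epsilon)+3s+\hat L^2\frac{(1+\epsilon)^2}{\lambda(1-\epsilon)}\big)$.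 Merit function $\mathcal{L}(x)=f(x)-\frac12\langle\mathrm{sym}(x^\top\nabla f(x)),x^\top x-I_r\rangle+\frac\gamma4\|x^\top x-I_r\|_F^2$. $L_{\mathcal{L}}$: Lipschitz constant of $\nabla\mathcal{L}$ on $\mathrm{St}(d,r)^\epsilon$; $L_\Lambda$: constant such that $\Lambda$ and all $\Lambda_i$ are $L_\Lambda$-Lipschitz (standing property); $L'=\max\{\hat L,L_{\mathcal{L}},L_\Lambda\}$. *)

(* Defs.v *)
From HB Require Import structures.
From mathcomp Require Import all_boot all_order all_algebra.
From mathcomp Require Import all_classical all_reals all_analysis.
Set Implicit Arguments. Unset Strict Implicit. Unset Printing Implicit Defensive.
Import Order.TTheory GRing.Theory Num.Theory.
Import numFieldNormedType.Exports.
Local Open Scope classical_set_scope.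
Local Open Scope ring_scope.

Section Defs.
Variable R : realType.

Definition frob_inner (m n : nat) (A B : 'M[R]_(m, n)) : R := \tr (A *m B^T).
Definition frob_norm (m n : nat) (A : 'M[R]_(m, n)) : R :=
  Num.sqrt (frob_inner A A).

Definition msym (m : nat) (A : 'M[R]_m) : 'M[R]_m := 2^-1 *: (A + A^T).
Definition mskew (m : nat) (A : 'M[R]_m) : 'M[R]_m := 2^-1 *: (A - A^T).

Definition ortho_defect (d r : nat) (x : 'M[R]_(d, r)) : 'M[R]_r :=
  x^T *m x - 1%:M.

Definition StEps (d r : nat) (eps : R) : set 'M[R]_(d, r) :=
  [set x | frob_norm (ortho_defect x) <= eps].

Definition has_gradient (d r : nat) (g : 'M[R]_(d, r) -> R)
  (G : 'M[R]_(d, r) -> 'M[R]_(d, r)) : Prop :=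
  forall x, differentiable g x /\ forall h, 'd g x h = frob_inner (G x) h.

(* L-smoothness (descent-lemma form, as in the paper) *)
Definition L_smooth (d r : nat) (L : R) (g : 'M[R]_(d, r) -> R)
  (G : 'M[R]_(d, r) -> 'M[R]_(d, r)) : Prop :=
  forall x y, g y <= g x + frob_inner (G x) (y - x) + L / 2 * frob_norm (y - x) ^+ 2.

Definition frob_lipschitz_on (d r : nat) (A : set 'M[R]_(d, r)) (K : R)
  (G : 'M[R]_(d, r) -> 'M[R]_(d, r)) : Prop :=
  forall x y, A x -> A y -> frob_norm (G x - G y) <= K * frob_norm (x - y).

Definition rgrad (d r : nat) (G : 'M[R]_(d, r) -> 'M[R]_(d, r))
  (x : 'M[R]_(d, r)) : 'M[R]_(d, r) := mskew (G x *m x^T) *m x.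

Definition LambdaF (d r : nat) (lam : R) (G : 'M[R]_(d, r) -> 'M[R]_(d, r))
  (x : 'M[R]_(d, r)) : 'M[R]_(d, r) :=
  rgrad G x + lam *: (x *m ortho_defect x).

Definition merit (d r : nat) (gam : R) (f : 'M[R]_(d, r) -> R)
  (G : 'M[R]_(d, r) -> 'M[R]_(d, r)) (x : 'M[R]_(d, r)) : R :=
  f x - 2^-1 * frob_inner (msym (x^T *m G x)) (ortho_defect x)
      + gam / 4 * frob_norm (ortho_defect x) ^+ 2.

Definition avgR (n : nat) (T : Type) (F : 'I_n -> T -> R) : T -> R :=
  fun x => n%:R^-1 * \sum_(i < n) F i x.
Definition avgM (n d r : nat) (T : Type) (F : 'I_n -> T -> 'M[R]_(d, r))
  : T -> 'M[R]_(d, r) :=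
  fun x => n%:R^-1 *: \sum_(i < n) F i x.

End Defs.

(* Main.v *)
Set Warnings "-notation-overridden,-ambiguous-paths,-notation-incompatible-prefix,-deprecated".
Require Import Defs.
From HB Require Import structures.
From mathcomp Require Import all_boot all_order all_algebra.
From mathcomp Require Import all_classical all_reals all_analysis.
From mathcomp Require Import complex spectral.
From mathcomp Require Import ring lra.
Set Implicit Arguments. Unset Strict Implicit. Unset Printing Implicit Defensive.
Import Order.TTheory GRing.Theory Num.Theory.
Import numFieldNormedType.Exports.
Local Open Scope classical_set_scope.
Local Open Scope ring_scope.
Lemma fiE (R : realType) m n (A B : 'M[R]_(m, n)) :
  frob_inner A B = \sum_i \sum_j A i j * B i j.
Proof.
rewrite /frob_inner /mxtrace; apply: eq_bigr => i _; rewrite !mxE.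
by apply: eq_bigr => j _; rewrite mxE.
Qed.

Lemma fiC (R : realType) m n (A B : 'M[R]_(m, n)) : frob_inner A B = frob_inner B A.
Proof. rewrite !fiE; apply: eq_bigr => i _; apply: eq_bigr => j _; exact: mulrC. Qed.

Lemma fiDl (R : realType) m n (A B C : 'M[R]_(m, n)) :
  frob_inner (A + B) C = frob_inner A C + frob_inner B C.
Proof. by rewrite /frob_inner mulmxDl mxtraceD. Qed.

Lemma fiZl (R : realType) m n k (A B : 'M[R]_(m, n)) :
  frob_inner (k *: A) B = k * frob_inner A B.
Proof. by rewrite /frob_inner -scalemxAl mxtraceZ. Qed.

Lemma fiNl (R : realType) m n (A B : 'M[R]_(m, n)) :
  frob_inner (- A) B = - frob_inner A B.
Proof. by rewrite -scaleN1r fiZl mulN1r. Qed.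

Lemma fiBl (R : realType) m n (A B C : 'M[R]_(m, n)) :
  frob_inner (A - B) C = frob_inner A C - frob_inner B C.
Proof. by rewrite fiDl fiNl. Qed.

Lemma fiDr (R : realType) m n (A B C : 'M[R]_(m, n)) :
  frob_inner C (A + B) = frob_inner C A + frob_inner C B.
Proof. by rewrite fiC fiDl !(fiC C). Qed.

Lemma fiZr (R : realType) m n k (A B : 'M[R]_(m, n)) :
  frob_inner B (k *: A) = k * frob_inner B A.
Proof. by rewrite fiC fiZl fiC. Qed.

Lemma fiNr (R : realType) m n (A B : 'M[R]_(m, n)) :
  frob_inner B (- A) = - frob_inner B A.
Proof. by rewrite fiC fiNl fiC. Qed.

Lemma fiBr (R : realType) m n (A B C : 'M[R]_(m, n)) :
  frob_inner C (A - B) = frob_inner C A - frob_inner C B.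
Proof. by rewrite fiDr fiNr. Qed.

Lemma fi0l (R : realType) m n (A : 'M[R]_(m, n)) : frob_inner 0 A = 0.
Proof. by rewrite fiE big1 // => i _; rewrite big1 // => j _; rewrite mxE mul0r. Qed.

Lemma fi0r (R : realType) m n (A : 'M[R]_(m, n)) : frob_inner A 0 = 0.
Proof. by rewrite fiC fi0l. Qed.

Lemma fi_ge0 (R : realType) m n (A : 'M[R]_(m, n)) : 0 <= frob_inner A A.
Proof. rewrite fiE; apply: sumr_ge0 => i _; apply: sumr_ge0 => j _; by rewrite -expr2 sqr_ge0. Qed.

Lemma fi_eq0 (R : realType) m n (A : 'M[R]_(m, n)) : frob_inner A A = 0 -> A = 0.
Proof.
rewrite fiE => /eqP; rewrite psumr_eq0; last first.
  by move=> i _; apply: sumr_ge0 => j _; by rewrite -expr2 sqr_ge0.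
move=> /allP H; apply/matrixP => i j; rewrite mxE.
have /implyP := H i (mem_index_enum _) => /(_ isT) /eqP /eqP.
rewrite psumr_eq0; last by move=> k _; by rewrite -expr2 sqr_ge0.
move=> /allP /(_ j (mem_index_enum _)) /implyP /(_ isT).
by rewrite mulf_eq0 orbb => /eqP.
Qed.

Lemma fiT (R : realType) m n (A B : 'M[R]_(m, n)) :
  frob_inner A^T B^T = frob_inner A B.
Proof.
rewrite !fiE exchange_big /=; apply: eq_bigr => i _; apply: eq_bigr => j _.
by rewrite !mxE.
Qed.

Lemma fiMl (R : realType) m n p (A : 'M[R]_(m, n)) (B : 'M[R]_(n, p)) C :
  frob_inner (A *m B) C = frob_inner B (A^T *m C).
Proof.
rewrite /frob_inner trmx_mul trmxK mulmxA [in RHS]mxtrace_mulC mulmxA.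
by [].
Qed.

Lemma fiMr (R : realType) m n p (A : 'M[R]_(m, n)) (B : 'M[R]_(n, p)) C :
  frob_inner (A *m B) C = frob_inner A (C *m B^T).
Proof. by rewrite /frob_inner trmx_mul trmxK mulmxA. Qed.

Lemma fiCS (R : realType) m n (A B : 'M[R]_(m, n)) :
  frob_inner A B ^+ 2 <= frob_inner A A * frob_inner B B.
Proof.
set a := frob_inner A A; set b := frob_inner B B; set c := frob_inner A B.
have b0 : 0 <= b by exact: fi_ge0.
have := fi_ge0 (b *: A - c *: B).
rewrite !(fiBl, fiBr, fiZl, fiZr) -/a -/b -/c (fiC B A) -/c.
have [bpos|] := ltP 0 b.
  move=> H.
  have E : b * (b * a - c * c) - c * (b * c - c * b) = b * (a * b - c ^+ 2) by ring.
  by move: H; rewrite E pmulr_rge0 // subr_ge0.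
move=> b0'; have b00 : b = 0 by apply/eqP; rewrite eq_le b0' b0.
have B0 : B = 0 by exact: fi_eq0.
by move=> _; rewrite /c B0 fi0r expr0n /= mulr0n; exact: mulr_ge0 (fi_ge0 _) b0.
Qed.
Lemma fn_ge0 (R : realType) m n (A : 'M[R]_(m, n)) : 0 <= frob_norm A.
Proof. exact: sqrtr_ge0. Qed.

Lemma fn_sq (R : realType) m n (A : 'M[R]_(m, n)) : frob_norm A ^+ 2 = frob_inner A A.
Proof. by rewrite /frob_norm sqr_sqrtr // fi_ge0. Qed.

Lemma fn_sqrt_le (R : realType) (u v : R) : 0 <= v -> u ^+ 2 <= v ^+ 2 -> Num.sqrt (u ^+ 2) <= v.
Proof. by move=> v0 H; rewrite -(ger0_norm v0) -sqrtr_sqr; apply: ler_wsqrtr. Qed.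

Lemma fi_le_fn (R : realType) m n (A B : 'M[R]_(m, n)) :
  frob_inner A B <= frob_norm A * frob_norm B.
Proof.
apply: (le_trans (ler_norm _)); rewrite -sqrtr_sqr /frob_norm -sqrtrM ?fi_ge0 //.
by apply: ler_wsqrtr; exact: fiCS.
Qed.

Lemma fn_triangle (R : realType) m n (A B : 'M[R]_(m, n)) :
  frob_norm (A + B) <= frob_norm A + frob_norm B.
Proof.
rewrite {1}/frob_norm -fn_sq; apply: fn_sqrt_le; first by rewrite addr_ge0 ?fn_ge0.
rewrite !fn_sq fiDl !fiDr (fiC B A) -!fn_sq.
have := fi_le_fn A B => H.
rewrite sqrrD; lra.
Qed.

Lemma fnN (R : realType) m n (A : 'M[R]_(m, n)) : frob_norm (- A) = frob_norm A.
Proof. by rewrite /frob_norm fiNl fiNr opprK. Qed.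

Lemma fn_sym (R : realType) m n (A B : 'M[R]_(m, n)) : frob_norm (A - B) = frob_norm (B - A).
Proof. by rewrite -fnN opprB. Qed.

Lemma fn0 (R : realType) m n : frob_norm (0 : 'M[R]_(m, n)) = 0.
Proof. by rewrite /frob_norm fi0l sqrtr0. Qed.

Lemma fnZ (R : realType) m n k (A : 'M[R]_(m, n)) : frob_norm (k *: A) = `|k| * frob_norm A.
Proof.
by rewrite /frob_norm fiZl fiZr mulrA -expr2 sqrtrM ?sqr_ge0 // sqrtr_sqr.
Qed.

Lemma fn_triangleB (R : realType) m n (A B : 'M[R]_(m, n)) :
  frob_norm A <= frob_norm B + frob_norm (A - B).
Proof. by have := fn_triangle B (A - B); rewrite addrC subrK. Qed.

Lemma fi_mul_le (R : realType) m n p (A : 'M[R]_(m, n)) (B : 'M[R]_(n, p)) :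
  frob_inner (A *m B) (A *m B) <= frob_inner A A * frob_inner B B.
Proof.
have entry i k : ((A *m B) i k) ^+ 2 <= (\sum_j A i j ^+ 2) * (\sum_j B j k ^+ 2).
  have := fiCS (row i A) (col k B)^T.
  rewrite !fiE !big_ord1.
  have -> : \sum_j row i A 0 j * (col k B)^T 0 j = (A *m B) i k.
    by rewrite mxE; apply: eq_bigr => j _; rewrite !mxE.
  have -> : \sum_j row i A 0 j * row i A 0 j = \sum_j A i j ^+ 2.
    by apply: eq_bigr => j _; rewrite !mxE expr2.
  have -> : \sum_j (col k B)^T 0 j * (col k B)^T 0 j = \sum_j B j k ^+ 2.
    by apply: eq_bigr => j _; rewrite !mxE expr2.
  by [].
rewrite fiE (fiE A) (fiE B).
apply: (@le_trans _ _ (\sum_i \sum_k ((\sum_j A i j ^+ 2) * (\sum_j B j k ^+ 2)))).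
  apply: ler_sum => i _; apply: ler_sum => k _; rewrite -expr2; exact: entry.
rewrite big_distrl /=; apply: ler_sum => i _.
rewrite -big_distrr /= exchange_big /=.
rewrite (eq_bigr (fun j => A i j ^+ 2)); last by move=> j _; rewrite expr2.
apply: ler_pM; first by apply: sumr_ge0 => j _; exact: sqr_ge0.
  by apply: sumr_ge0 => k _; apply: sumr_ge0 => j _; exact: sqr_ge0.
  by [].
by apply: ler_sum => j _; apply: ler_sum => k _; rewrite expr2.
Qed.

Lemma fn_mul (R : realType) m n p (A : 'M[R]_(m, n)) (B : 'M[R]_(n, p)) :
  frob_norm (A *m B) <= frob_norm A * frob_norm B.
Proof.
by rewrite /frob_norm -sqrtrM ?fi_ge0 //; apply: ler_wsqrtr; exact: fi_mul_le.
Qed.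
Lemma spectral_real (R : realType) r' (Phi : 'M[R]_r'.+1) : Phi^T = Phi ->
  exists e : 'I_r'.+1 -> R, exists U : 'M[R[i]]_r'.+1, U \in unitmx /\
   forall q : {poly R}, map_mx (real_complex R) (horner_mx Phi q) =
     invmx U *m diag_mx (\row_i (real_complex R q.[e i])) *m U.
Proof.
move=> Psym.
set Pc := map_mx (real_complex R) Phi.
have Pc_sym : Pc \is symmetricmx.
  by rewrite is_hermitianmxE expr0 scale1r map_mx_id // /Pc map_trmx Psym.
have Pc_real : Pc \is a realmx.
  by apply/mxOverP => i j; rewrite mxE; apply/complex_realP; eexists.
have Pc_herm := realsym_hermsym Pc_sym Pc_real.
have /orthomx_spectralP Pc_eq := hermitian_normalmx Pc_herm.
have Dreal := hermitian_spectral_diag_real Pc_herm.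
set U := spectralmx Pc in Pc_eq *.
set D := spectral_diag Pc in Pc_eq Dreal *.
exists (fun i => complex.Re (D 0 i)), U; split; first exact: spectral_unit.
move=> q; rewrite map_horner_mx -/Pc Pc_eq horner_mx_uconjC; last exact: spectral_unit.
rewrite horner_mx_diag; congr (_ *m diag_mx _ *m _).
apply/rowP => i; rewrite !mxE.
have Di : D 0 i \is Num.real by move/mxOverP: Dreal => /(_ 0 i).
by rewrite -[in LHS](RRe_real Di) horner_map.
Qed.
Lemma spec_const (R : realType) r' (Phi : 'M[R]_r'.+1) (e : 'I_r'.+1 -> R)
  (U : 'M[R[i]]_r'.+1) : U \in unitmx ->
  (forall q : {poly R}, map_mx (real_complex R) (horner_mx Phi q) =
     invmx U *m diag_mx (\row_i (real_complex R q.[e i])) *m U) ->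
  forall (q : {poly R}) c, (forall i, q.[e i] = c) -> horner_mx Phi q = c%:M.
Proof.
move=> Uu HU q c Hq.
apply: (@map_mx_inj _ _ (real_complex R)).
rewrite HU map_scalar_mx.
have -> : \row_i real_complex R q.[e i] = const_mx (real_complex R c).
  by apply/rowP => i; rewrite !mxE Hq.
by rewrite diag_const_mx mul_mx_scalar -scalemxAl mulVmx // scalemx1.
Qed.

Lemma spec_trace (R : realType) r' (Phi : 'M[R]_r'.+1) (e : 'I_r'.+1 -> R)
  (U : 'M[R[i]]_r'.+1) : U \in unitmx ->
  (forall q : {poly R}, map_mx (real_complex R) (horner_mx Phi q) =
     invmx U *m diag_mx (\row_i (real_complex R q.[e i])) *m U) ->
  forall (q : {poly R}), \tr (horner_mx Phi q) = \sum_i q.[e i].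
Proof.
move=> Uu HU q.
apply: complexI.
rewrite -trace_map_mx HU mxtrace_mulC mulmxA mulmxV // mul1mx mxtrace_diag.
rewrite rmorph_sum; apply: eq_bigr => i _; by rewrite mxE.
Qed.
Lemma interp (R : realType) (g : R -> R) (s : seq R) :
  exists p : {poly R}, forall a, a \in s -> p.[a] = g a.
Proof.
elim: s => [|a s [p Hp]]; first by exists 0.
have [ain|anin] := boolP (a \in s).
  by exists p => b; rewrite in_cons => /orP[/eqP->|]; [exact: Hp|exact: Hp].
set w := \prod_(b <- s) ('X - b%:P).
have w0 b : b \in s -> w.[b] = 0.
  move=> bs; rewrite /w horner_prod; apply/eqP; rewrite prodf_seq_eq0.
  by apply/hasP; exists b => //=; rewrite hornerXsubC subrr eqxx.
have wa : w.[a] != 0.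
  rewrite /w horner_prod prodf_seq_neq0; apply/allP => b bs /=.
  by rewrite hornerXsubC subr_eq0; apply: contraNneq anin => ->.
exists (p + ((g a - p.[a]) / w.[a]) *: w) => b.
rewrite in_cons => /orP[/eqP->|bs].
  by rewrite hornerD hornerZ divfK // addrC subrK.
by rewrite hornerD hornerZ (w0 b bs) mulr0 addr0 Hp.
Qed.
Lemma horner_tr (R : realType) r' (A : 'M[R]_r'.+1) q : A^T = A ->
  (horner_mx A q)^T = horner_mx A q.
Proof.
move=> As; elim/poly_ind: q => [|q c IH]; first by rewrite rmorph0 trmx0.
rewrite rmorphD rmorphM /= horner_mx_X horner_mx_C raddfD /= tr_scalar_mx.
rewrite -[_ * A]/(_ *m A) trmx_mul IH As.
by rewrite (comm_horner_mx q (erefl (A *m A))).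
Qed.

Lemma ortho_sym (R : realType) d r (x : 'M[R]_(d, r)) : (ortho_defect x)^T = ortho_defect x.
Proof. by rewrite /ortho_defect raddfD raddfN /= trmx_mul trmxK tr_scalar_mx. Qed.

Lemma polar (R : realType) d r (x : 'M[R]_(d, r)) :
  frob_norm (ortho_defect x) < 1 ->
  exists y : 'M[R]_(d, r), ortho_defect y = 0 /\
    frob_norm (x - y) * (1 + Num.sqrt (1 - frob_norm (ortho_defect x)))
      <= frob_norm (ortho_defect x).
Proof.
case: r x => [|r'] x phi1.
  by exists x; split; [exact: flatmx0 | rewrite subrr fn0 mul0r fn_ge0].
set Phi := ortho_defect x in phi1 *.
set phi := frob_norm Phi in phi1 *.
have Psym : Phi^T = Phi by exact: ortho_sym.
have [e [U [Uu HU]]] := spectral_real Psym.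
have Htr := spec_trace Uu HU. have Hc := spec_const Uu HU.
have sum_e2 : \sum_i e i ^+ 2 = phi ^+ 2.
  have H := Htr ('X ^+ 2).
  rewrite rmorphXn /= (horner_mx_X Phi) in H.
  rewrite (eq_bigr (fun i => ('X ^+ 2 : {poly R}).[e i])); last by move=> i _; rewrite hornerXn.
  by rewrite -H /phi fn_sq /frob_inner Psym expr2.
have phi0 : 0 <= phi := fn_ge0 _.
have e_le i : e i ^+ 2 <= phi ^+ 2.
  rewrite -sum_e2 (bigD1 i) //= lerDl; apply: sumr_ge0 => j _; exact: sqr_ge0.
have e_ge i : - phi <= e i by have := e_le i; nra.
have e1 i : 0 < 1 + e i by have := e_ge i; lra.
pose g := fun t : R => (Num.sqrt (1 + t))^-1.
have [p Hp] := interp g [seq e i | i <- index_enum 'I_r'.+1].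
have Hpe i : p.[e i] = g (e i) by apply: Hp; apply: map_f; exact: mem_index_enum.
set P := horner_mx Phi p.
have PT : P^T = P := horner_tr p Psym.
have xtx : x^T *m x = horner_mx Phi (1 + 'X).
  by rewrite rmorphD rmorph1 /= horner_mx_X /Phi /ortho_defect addrC subrK.
exists (x *m P); split.
  have E : horner_mx Phi (p * (1 + 'X) * p) = 1%:M.
    apply: Hc => i; rewrite !hornerE Hpe /g.
    have s0 : 0 < Num.sqrt (1 + e i) by rewrite sqrtr_gt0.
    have s2 : Num.sqrt (1 + e i) ^+ 2 = 1 + e i by rewrite sqr_sqrtr // ltW.
    move: s0 s2; set s := Num.sqrt (1 + e i) => s0 s2.
    rewrite -s2; field; exact: lt0r_neq0.
  move: E; rewrite !rmorphM /= -/P -xtx => E.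
  rewrite /ortho_defect trmx_mul PT mulmxA -(mulmxA P) -[P *m _ *m _]/(P * _ * P) E.
  by rewrite subrr.
have Qdef : x - x *m P = x *m horner_mx Phi (1 - p).
  by rewrite rmorphB rmorph1 /= -/P mulmxBr mulmx1.
rewrite Qdef; set Q := horner_mx Phi (1 - p).
have QT : Q^T = Q := horner_tr _ Psym.
have Hfi : frob_inner (x *m Q) (x *m Q) = \sum_i (1 + e i) * (1 - g (e i)) * (1 - g (e i)).
  rewrite /frob_inner trmx_mul QT mulmxA mxtrace_mulC !mulmxA xtx.
  rewrite -[_ *m Q *m Q]/(_ * Q * Q) /Q -!rmorphM Htr.
  by apply: eq_bigr => i _; rewrite !hornerE Hpe.
have t0 : 0 <= Num.sqrt (1 - phi) := sqrtr_ge0 _.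
have t2 : Num.sqrt (1 - phi) ^+ 2 = 1 - phi by rewrite sqr_sqrtr // subr_ge0 ltW.
move: t0 t2; set t := Num.sqrt (1 - phi) => t0 t2.
have term i : (1 + e i) * (1 - g (e i)) * (1 - g (e i)) * (1 + t) ^+ 2 <= e i ^+ 2.
  rewrite /g.
  have s0 : 0 < Num.sqrt (1 + e i) by rewrite sqrtr_gt0.
  have s2 : Num.sqrt (1 + e i) ^+ 2 = 1 + e i by rewrite sqr_sqrtr // ltW.
  move: s0 s2; set s := Num.sqrt (1 + e i) => s0 s2.
  have ei := e_ge i.
  have st : t <= s by nra.
  have E : (1 + e i) * (1 - s^-1) * (1 - s^-1) = (s - 1) ^+ 2.
    by rewrite -s2; field; exact: lt0r_neq0.
  rewrite E.
  have ee : e i = s ^+ 2 - 1 by rewrite s2 addrC addKr.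
  have -> : e i ^+ 2 = (s - 1) ^+ 2 * (s + 1) ^+ 2 by rewrite ee; ring.
  apply: ler_wpM2l; first exact: sqr_ge0.
  by nra.
have fn0' := fn_ge0 (x *m Q).
have : (frob_norm (x *m Q) * (1 + t)) ^+ 2 <= phi ^+ 2.
  rewrite exprMn fn_sq Hfi -sum_e2 big_distrl /=.
  by apply: ler_sum => i _; exact: term.
nra.
Qed.
Lemma mskewT (R : realType) m (A : 'M[R]_m) : (mskew A)^T = - mskew A.
Proof.
rewrite /mskew linearZ /= raddfB /= trmxK -scalerN opprB //.
Qed.

Lemma msymT (R : realType) m (A : 'M[R]_m) : (msym A)^T = msym A.
Proof. by rewrite /msym linearZ /= raddfD /= trmxK addrC. Qed.

Lemma sqr_le_imp (R : realType) (a b : R) : 0 <= b -> a ^+ 2 <= b ^+ 2 -> a <= b.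
Proof. by move=> b0 H; nra. Qed.

Lemma Phi_bound (R : realType) d r (gf : 'M[R]_(d, r) -> 'M[R]_(d, r)) lam x :
  0 < lam -> frob_norm (ortho_defect x) < 1 ->
  lam * (1 - frob_norm (ortho_defect x)) * frob_norm (ortho_defect x)
   <= Num.sqrt (1 + frob_norm (ortho_defect x)) * frob_norm (LambdaF lam gf x).
Proof.
move=> lam0.
set Phi := ortho_defect x; set phi := frob_norm Phi => phi1.
have phi0 : 0 <= phi := fn_ge0 _.
have xtx : x^T *m x = Phi + 1%:M by rewrite /Phi /ortho_defect subrK.
have Psym : Phi^T = Phi := ortho_sym x.
set L := LambdaF lam gf x.
set W := x^T *m (mskew (gf x *m x^T) *m x).
set Z := lam *: (Phi *m Phi + Phi).
have ME : x^T *m L = W + Z.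
  rewrite /L /LambdaF /rgrad mulmxDr -scalemxAr -/Phi (mulmxA x^T x) xtx /Z.
  by rewrite mulmxDl mul1mx.
have WT : W^T = - W.
  by rewrite /W !trmx_mul trmxK mskewT mulmxN mulNmx mulmxA.
have ZT : Z^T = Z.
  rewrite /Z linearZ /= raddfD /= trmx_mul Psym //.
have WZ : frob_inner W Z = 0.
  have : frob_inner W Z = - frob_inner W Z.
    by rewrite -{1}(fiT W Z) WT ZT fiNl.
  move=> H; have : 2 * frob_inner W Z = 0 by rewrite mulr2n mulrDl mul1r {1}H addNr.
  by move/eqP; rewrite mulf_eq0 pnatr_eq0 /= => /eqP.
set M := x^T *m L.
have fnZM : frob_norm Z <= frob_norm M.
  rewrite /frob_norm; apply: ler_wsqrtr.
  rewrite /M ME fiDl !fiDr WZ (fiC Z W) WZ add0r addr0 lerDr; exact: fi_ge0.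
have fnZ : lam * (1 - phi) * phi <= frob_norm Z.
  rewrite /Z fnZ gtr0_norm //.
  have h1 := fn_triangleB Phi (Phi *m Phi + Phi).
  have E : Phi - (Phi *m Phi + Phi) = - (Phi *m Phi) by rewrite opprD addrCA subrr addr0.
  rewrite E fnN in h1.
  have h2 := fn_mul Phi Phi.
  rewrite -/phi in h1 h2.
  have : (1 - phi) * phi <= frob_norm (Phi *m Phi + Phi) by nra.
  by rewrite -mulrA; apply: ler_wpM2l; exact: ltW.
have q0 : 0 <= Num.sqrt (1 + phi) := sqrtr_ge0 _.
have q2 : Num.sqrt (1 + phi) ^+ 2 = 1 + phi by rewrite sqr_sqrtr //; lra.
move: q0 q2; set q := Num.sqrt (1 + phi) => q0 q2.
have fnxM : frob_norm (x *m M) <= q * frob_norm M.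
  apply: sqr_le_imp; first by rewrite mulr_ge0 ?fn_ge0.
  rewrite fn_sq fiMl mulmxA xtx mulmxDl mul1mx fiDr exprMn q2 fn_sq.
  have h1 := fi_le_fn M (Phi *m M).
  have h2 := fn_mul Phi M.
  have h3 := fn_ge0 M. have h4 := fn_ge0 (Phi *m M).
  rewrite -fn_sq; rewrite -/phi in h2; nra.
have fnM : frob_norm M <= q * frob_norm L.
  have h1 : frob_norm M ^+ 2 <= frob_norm L * frob_norm (x *m M).
    by rewrite fn_sq {1}/M fiMl trmxK; exact: fi_le_fn.
  have h3 := fn_ge0 M. have h4 := fn_ge0 L. have h5 := fn_ge0 (x *m M).
  have h6 : frob_norm L * frob_norm (x *m M) <= frob_norm L * (q * frob_norm M).
    exact: ler_wpM2l.
  have h7 : frob_norm M * frob_norm M <= frob_norm M * (q * frob_norm L).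
    have -> : frob_norm M * (q * frob_norm L) = frob_norm L * (q * frob_norm M) by ring.
    by rewrite -expr2; apply: (le_trans h1).
  have [->|Mpos] := eqVneq (frob_norm M) 0; first by rewrite mulr_ge0.
  have Mp : 0 < frob_norm M by rewrite lt0r Mpos h3.
  by rewrite -(ler_pM2l Mp).
lra.
Qed.
Lemma stiefel_grad (R : realType) d r (G y : 'M[R]_(d, r)) : y^T *m y = 1%:M ->
  frob_norm (G - y *m msym (y^T *m G)) <= 2 * frob_norm (mskew (G *m y^T) *m y).
Proof.
move=> yy.
set Rg := mskew (G *m y^T) *m y.
set a := G; set b := y *m (G^T *m y); set c := y *m (y^T *m G).
have E1 : Rg = 2^-1 *: (a - b).
  rewrite /Rg /mskew -scalemxAl mulmxBl trmx_mul trmxK -mulmxA yy mulmx1.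
  by rewrite -mulmxA.
have E2 : y *m (y^T *m Rg) = 2^-1 *: (c - b).
  rewrite E1 -!scalemxAr mulmxBr mulmxBr /b (mulmxA y^T y) yy mul1mx.
  by rewrite /c /a.
have E3 : G - y *m msym (y^T *m G) = a - 2^-1 *: (c + b).
  rewrite /msym -scalemxAr mulmxDr trmx_mul trmxK /c /b.
  by rewrite /a.
have WE : G - y *m msym (y^T *m G) = Rg + (Rg - y *m (y^T *m Rg)).
  rewrite E2 E3 E1; apply/matrixP => i j; rewrite !mxE.
  lra.
rewrite WE.
apply: (le_trans (fn_triangle _ _)).
have : frob_norm (Rg - y *m (y^T *m Rg)) <= frob_norm Rg.
  rewrite /frob_norm; apply: ler_wsqrtr.
  rewrite !(fiBl, fiBr) (fiC Rg (y *m _)) (fiMl y (y^T *m Rg) Rg).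
  rewrite (fiMl y (y^T *m Rg) (y *m (y^T *m Rg))) mulmxA yy mul1mx.
  have := fi_ge0 (y^T *m Rg); lra.
lra.
Qed.
Lemma cvg_bigsum (R : realType) (T : Type) (F : set_system T) {FF : Filter F}
  (I : Type) (s : seq I) (g : I -> T -> R) (l : I -> R) :
  (forall i, g i @ F --> l i) ->
  (fun t => \sum_(i <- s) g i t) @ F --> \sum_(i <- s) l i.
Proof.
move=> H; elim: s => [|a s IH].
  rewrite big_nil (_ : (fun t => _) = fun _ => 0); first exact: cvg_cst.
  by apply/funext => t; rewrite big_nil.
rewrite big_cons (_ : (fun t => _) = g a + (fun t => \sum_(i <- s) g i t)).
  exact: cvgD.
by apply/funext => t; rewrite big_cons.
Qed.

Definition ecv (R : realType) (T : Type) (F : set_system T) m n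
  (A : T -> 'M[R]_(m, n)) (A0 : 'M[R]_(m, n)) :=
  forall i j, (fun t => A t i j) @ F --> A0 i j.

Lemma ecv_cst (R : realType) T (F : set_system T) {FF : Filter F} m n (A0 : 'M[R]_(m, n)) :
  ecv F (fun _ => A0) A0.
Proof. by move=> i j; exact: cvg_cst. Qed.

Lemma ecv_add (R : realType) T (F : set_system T) {FF : Filter F} m n
  (A B : T -> 'M[R]_(m, n)) A0 B0 :
  ecv F A A0 -> ecv F B B0 -> ecv F (fun t => A t + B t) (A0 + B0).
Proof.
move=> HA HB i j; rewrite mxE.
rewrite (_ : (fun t => _) = (fun t => A t i j) + (fun t => B t i j)).
  exact: cvgD.
by apply/funext => t; rewrite mxE.
Qed.

Lemma ecv_scale (R : realType) T (F : set_system T) {FF : Filter F} m n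
  (A : T -> 'M[R]_(m, n)) A0 (k : R) :
  ecv F A A0 -> ecv F (fun t => k *: A t) (k *: A0).
Proof.
move=> HA i j; rewrite mxE.
rewrite (_ : (fun t => _) = (fun t => k * A t i j)).
  exact: cvgMl_tmp.
by apply/funext => t; rewrite mxE.
Qed.

Lemma ecv_tr (R : realType) T (F : set_system T) {FF : Filter F} m n
  (A : T -> 'M[R]_(m, n)) A0 :
  ecv F A A0 -> ecv F (fun t => (A t)^T) A0^T.
Proof.
move=> HA i j; rewrite mxE.
rewrite (_ : (fun t => _) = (fun t => A t j i)); first exact: HA.
by apply/funext => t; rewrite mxE.
Qed.

Lemma ecv_mul (R : realType) T (F : set_system T) {FF : Filter F} m n p
  (A : T -> 'M[R]_(m, n)) (B : T -> 'M[R]_(n, p)) A0 B0 :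
  ecv F A A0 -> ecv F B B0 -> ecv F (fun t => A t *m B t) (A0 *m B0).
Proof.
move=> HA HB i j; rewrite mxE.
rewrite (_ : (fun t => _) = (fun t => \sum_k (A t i k * B t k j))).
  apply: cvg_bigsum => k; exact: cvgM.
by apply/funext => t; rewrite mxE.
Qed.

Lemma ecv_fi (R : realType) T (F : set_system T) {FF : Filter F} m n
  (A B : T -> 'M[R]_(m, n)) A0 B0 :
  ecv F A A0 -> ecv F B B0 ->
  (fun t => frob_inner (A t) (B t)) @ F --> frob_inner A0 B0.
Proof.
move=> HA HB; rewrite fiE.
rewrite (_ : (fun t => _) = (fun t => \sum_i \sum_j A t i j * B t i j)).
  apply: cvg_bigsum => i; apply: cvg_bigsum => j; exact: cvgM.
by apply/funext => t; rewrite fiE.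
Qed.

Lemma ecv_msym (R : realType) T (F : set_system T) {FF : Filter F} m
  (A : T -> 'M[R]_m) A0 :
  ecv F A A0 -> ecv F (fun t => msym (A t)) (msym A0).
Proof.
move=> HA; rewrite /msym; apply: ecv_scale; apply: ecv_add => //; exact: ecv_tr.
Qed.
Lemma fi_suml (R : realType) m n (I : Type) (s : seq I) (A : I -> 'M[R]_(m, n)) B :
  frob_inner (\sum_(i <- s) A i) B = \sum_(i <- s) frob_inner (A i) B.
Proof.
elim/big_rec2: _ => [|i S1 s1 _ <-]; first exact: fi0l.
by rewrite fiDl.
Qed.

Lemma ecv_line (R : realType) m n (C D : 'M[R]_(m, n)) :
  ecv 0^' (fun t : R => t *: C + D) D.
Proof.
move=> i j.
rewrite (_ : (fun t => _) = (fun t => t * C i j) + (fun _ => D i j)); last first.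
  by apply/funext => t; rewrite !mxE.
rewrite -[X in _ --> X]add0r; apply: cvgD; last exact: cvg_cst.
rewrite -[X in _ --> X](mul0r (C i j)); apply: cvgM; [exact: cvg_within | exact: cvg_cst].
Qed.

Lemma grad_stiefel (R : realType) d r n (F : 'I_n -> 'M[R]_(d, r) -> R)
  (gF : 'I_n -> 'M[R]_(d, r) -> 'M[R]_(d, r)) gam (gLc : 'M[R]_(d, r) -> 'M[R]_(d, r)) y :
  (forall i, has_gradient (F i) (gF i)) ->
  {for y, continuous (avgM gF)} ->
  has_gradient (merit gam (avgR F) (avgM gF)) gLc ->
  ortho_defect y = 0 ->
  gLc y = avgM gF y - y *m msym (y^T *m avgM gF y).
Proof.
move=> HF Hc Hm y0.
set f := avgR F; set gf := avgM gF.
set S := msym (y^T *m gf y).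
set W := gf y - y *m S.
have yy : y^T *m y = 1%:M by apply/eqP; rewrite -subr_eq0; apply/eqP.
have key h : frob_inner (gLc y) h = frob_inner W h.
  have [dm Hdm] := Hm y.
  rewrite -Hdm -deriveE // /derive; apply: cvg_lim => //.
  set K := h^T *m y + y^T *m h.
  set Mt := fun t : R => K + t *: (h^T *m h).
  set qf := fun t : R => t^-1 *: ((f \o shift y) (t *: h) - f y).
  set T2 := fun t : R => frob_inner (msym ((t *: h + y)^T *m gf (t *: h + y))) (Mt t).
  set T3 := fun t : R => t * frob_inner (Mt t) (Mt t).
  have HA : qf @ 0^' --> frob_inner (gf y) h.
    rewrite (_ : qf = fun t => n%:R^-1 * \sum_i (t^-1 *: ((F i \o shift y) (t *: h) - F i y))); last first.
      apply/funext => t; rewrite /qf /f /avgR /= -mulrBr -sumrB.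
      rewrite -[X in X = _]/(t^-1 * _) mulrCA; congr (_ * _).
      by rewrite mulr_sumr.
    rewrite /gf /avgM fiZl fi_suml; apply: cvgMl_tmp; apply: cvg_bigsum => i.
    have [dFi HdFi] := HF i y.
    rewrite -HdFi -deriveE //.
    exact: (diff_derivable dFi).
  have Hline : (fun t : R => t *: h + y) @ 0^' --> y.
    rewrite -[X in _ --> X]add0r; apply: cvgD; last exact: cvg_cst.
    rewrite -(scale0r h); apply: cvgZr_tmp; exact: cvg_within.
  have Hg : ecv 0^' (fun t : R => gf (t *: h + y)) (gf y).
    move=> i j.
    have H1 : (fun t : R => gf (t *: h + y)) @ 0^' --> gf y.
      exact: (@cvg_comp _ _ _ (fun t : R => t *: h + y) gf 0^' (nbhs y) (nbhs (gf y)) Hline Hc).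
    exact: (@cvg_comp _ _ _ (fun t : R => gf (t *: h + y)) (fun M => M i j) 0^' (nbhs (gf y)) (nbhs (gf y i j)) H1 (@coord_continuous _ _ _ i j (gf y))).
  have HM : ecv 0^' Mt K.
    rewrite (_ : Mt = fun t => t *: (h^T *m h) + K); first exact: ecv_line.
    by apply/funext => t; rewrite /Mt addrC.
  have HB : T2 @ 0^' --> frob_inner S K.
    apply: ecv_fi => //; apply: ecv_msym; apply: ecv_mul => //.
    apply: ecv_tr; exact: ecv_line.
  have HC : T3 @ 0^' --> 0.
    rewrite -[X in _ --> X](mul0r (frob_inner K K)); apply: cvgM; first exact: cvg_within.
    exact: ecv_fi.
  have Hcombo : (qf - (fun t => 2^-1 * T2 t) + (fun t => gam / 4 * T3 t)) @ 0^' -->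
      frob_inner (gf y) h - 2^-1 * frob_inner S K + gam / 4 * 0.
    apply: cvgD; last exact: cvgMl_tmp.
    apply: cvgB => //; exact: cvgMl_tmp.
  have -> : frob_inner W h = frob_inner (gf y) h - 2^-1 * frob_inner S K + gam / 4 * 0.
    rewrite mulr0 addr0 /W fiBl fiMl /K fiDr.
    have -> : frob_inner S (h^T *m y) = frob_inner S (y^T *m h).
      by rewrite -fiT msymT trmx_mul trmxK.
    by rewrite fiC; congr (_ - _); field.
  have OD t : ortho_defect (t *: h + y) = t *: Mt t.
    rewrite /ortho_defect [(t *: h + y)^T]raddfD /= [(t *: h)^T]linearZ /= mulmxDl !mulmxDr -!scalemxAl -!scalemxAr yy.
    rewrite /Mt /K; set a := h^T *m h; set b := h^T *m y; set c := y^T *m h.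
    by apply/matrixP => i j; rewrite !mxE; ring.
  have EQ t : t != 0 -> t^-1 *: (merit gam (avgR F) (avgM gF) (t *: h + y)
       - merit gam (avgR F) (avgM gF) y) = qf t - 2^-1 * T2 t + gam / 4 * T3 t.
    move=> t0; rewrite /qf /T2 /T3 /f /gf /merit /= OD y0 fi0r fn0.
    rewrite (fiZr t (Mt t)) /frob_norm sqr_sqrtr ?fi_ge0 // (fiZl t (Mt t)) (fiZr t (Mt t)).
    rewrite expr0n /=.
    set A := frob_inner (msym _) (Mt t); set B := frob_inner (Mt t) (Mt t).
    rewrite -[t^-1 *: _]/(t^-1 * _) -[t^-1 *: (avgR F _ - _)]/(t^-1 * _).
    by field.
  apply: cvg_trans Hcombo; apply: near_eq_cvg.
  rewrite near_withinE; apply: filterE => t t0 /=.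
  exact: (esym (EQ t t0)).
have D0 : gLc y - W = 0.
  apply: fi_eq0; rewrite fiBl !key.
  by rewrite fiBl subrr.
by apply/eqP; rewrite -subr_eq0 D0.
Qed.
Unset Implicit Arguments.
Theorem lemma15 (R : realType) (d r n : nat)
  (F : 'I_n -> 'M[R]_(d, r) -> R) (gF : 'I_n -> 'M[R]_(d, r) -> 'M[R]_(d, r))
  (L eps lam gam LLc LLam : R)
  (gLc : 'M[R]_(d, r) -> 'M[R]_(d, r)) :
  (0 < n)%N ->
  0 < eps -> eps < 3 / 4 ->
  0 < lam ->
  (* each f_i differentiable (with gradient gF i) and L-smooth *)
  (forall i, has_gradient (F i) (gF i)) ->
  (forall i, L_smooth L (F i) (gF i)) ->
  let f := avgR F in
  let gf := avgM gF in
  (* f is C^2: its gradient is differentiable with continuous derivative *)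
  (forall x, differentiable gf x) ->
  (forall h, continuous (fun x => 'd gf x h)) ->
  let S := @StEps R d r eps in
  let Lhat := Num.max L (sup [set frob_norm (gf x) | x in S]) in
  let s := sup [set frob_norm (msym (x^T *m gf x)) | x in S] in
  gam >= 2 / (3 - 4 * eps) *
         (L * (1 - eps) + 3 * s
          + Lhat ^+ 2 * ((1 + eps) ^+ 2 / (lam * (1 - eps)))) ->
  (* gLc is the gradient of the merit function, L-Lipschitz on St^eps *)
  has_gradient (merit gam f gf) gLc ->
  frob_lipschitz_on S LLc gLc ->
  (* Lambda and all Lambda_i are LLam-Lipschitz on St^eps *)
  frob_lipschitz_on S LLam (LambdaF lam gf) ->
  (forall i, frob_lipschitz_on S LLam (LambdaF lam (gF i))) ->
  let L' := Num.max Lhat (Num.max LLc LLam) in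
  let C := 3 * L' / (lam * (1 - eps)) + 2 in
  forall x, S x -> frob_norm (gLc x) <= C * frob_norm (LambdaF lam gf x).
Proof.
move=> n0 eps0 eps34 lam0 HF HL f gf Hgfd Hgfc S Lhat s Hgam Hm Hlipc HlipL HlipLi L' C x Sx.
have phie : frob_norm (ortho_defect x) <= eps := Sx.
set phi := frob_norm (ortho_defect x) in phie.
have phi0 : 0 <= phi := fn_ge0 _.
have phi1 : phi < 1 by lra.
have [y [y0 Hy]] := polar phi1.
rewrite -/phi in Hy.
have Hg : gLc y = gf y - y *m msym (y^T *m gf y).
  exact: (grad_stiefel HF (differentiable_continuous (Hgfd y)) Hm y0).
have Sy : S y by rewrite /S /StEps /= y0 fn0 ltW.
have yy : y^T *m y = 1%:M by apply/eqP; rewrite -subr_eq0; apply/eqP.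
have Hst := stiefel_grad (gf y) yy.
have Ly : LambdaF lam gf y = mskew (gf y *m y^T) *m y.
  by rewrite /LambdaF /rgrad y0 mulmx0 scaler0 addr0.
rewrite -Ly -Hg in Hst.
set Ln := frob_norm (LambdaF lam gf x).
set D := frob_norm (x - y).
have D0 : 0 <= D := fn_ge0 _.
have HLy : frob_norm (LambdaF lam gf y) <= Ln + LLam * D.
  apply: (le_trans (fn_triangleB _ (LambdaF lam gf x))); rewrite -/Ln.
  by rewrite lerD2l /D fn_sym; apply: HlipL.
have Hgx : frob_norm (gLc x) <= frob_norm (gLc y) + LLc * D.
  apply: (le_trans (fn_triangleB _ (gLc y))).
  by rewrite lerD2l; apply: Hlipc.
have t0 : 0 <= Num.sqrt (1 - phi) := sqrtr_ge0 _.
have t2 : Num.sqrt (1 - phi) ^+ 2 = 1 - phi by rewrite sqr_sqrtr //; lra.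
have q0 : 0 <= Num.sqrt (1 + phi) := sqrtr_ge0 _.
have q2 : Num.sqrt (1 + phi) ^+ 2 = 1 + phi by rewrite sqr_sqrtr //; lra.
have HPb := Phi_bound gf lam0 phi1.
rewrite -/phi -/Ln in HPb.
move: t0 t2 q0 q2 Hy HPb; set t := Num.sqrt (1 - phi); set q := Num.sqrt (1 + phi).
move=> t0 t2 q0 q2 Hy HPb.
have qt : q <= 1 + t.
  apply: sqr_le_imp; first lra.
  rewrite q2.
  have : 2 * phi - 1 <= 2 * t by nra.
  nra.
have Ln0 : 0 <= Ln := fn_ge0 _.
have HD : lam * (1 - eps) * D <= Ln.
  have c0 : 0 < 1 + t by lra.
  rewrite -(ler_pM2r c0).
  have h1 : lam * (1 - eps) * D * (1 + t) <= lam * (1 - eps) * phi.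
    by rewrite -mulrA; apply: ler_wpM2l => //; apply: mulr_ge0; lra.
  have h2 : lam * (1 - eps) * phi <= lam * (1 - phi) * phi.
    by apply: ler_wpM2r => //; apply: ler_wpM2l; lra.
  have h3 : q * Ln <= (1 + t) * Ln by exact: ler_wpM2r.
  lra.
have sup0 : 0 <= sup [set frob_norm (gf x0) | x0 in S].
  have [hs|nhs] := pselect (has_sup [set frob_norm (gf x0) | x0 in S]).
    apply: (le_trans (fn_ge0 (gf x))); apply: (sup_upper_bound hs).
    by exists x.
  by rewrite sup_out.
have L'0 : 0 <= L'.
  by apply: (le_trans sup0); rewrite /L' /Lhat !le_max lexx !orbT.
have LcL : LLc <= L' by rewrite /L' !le_max lexx !orbT.
have LaL : LLam <= L' by rewrite /L' !le_max lexx !orbT.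
have h4 : LLc * D <= L' * D by exact: ler_wpM2r.
have h5 : LLam * D <= L' * D by exact: ler_wpM2r.
have le0 : 0 < lam * (1 - eps) by apply: mulr_gt0; lra.
have h6 : L' * D <= L' / (lam * (1 - eps)) * Ln.
  rewrite mulrAC ler_pdivlMr //; rewrite -mulrA; apply: ler_wpM2l => //.
  by rewrite mulrC.
rewrite /C mulrDl.
lra.
Qed.
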